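(* Let $n\ge 2$ and let $\mathbf{C}_n=\langle C_n,\wedge,\vee,\to,0,1\rangle$ be a semi-Heyting algebra whose lattice reduct is the chain $C_n=\{a_0<a_1<\cdots<a_{n-1}\}$ with $a_0=0$, $a_{n-1}=1$. Then the set $C_n\setminus\{a_0\}=\{a_1,\dots,a_{n-1}\}$ is closed under $\wedge,\vee,\to$ (in particular $a\to b\neq a_0$ for all $a,b\in C_n\setminus\{a_0\}$), and $\mathbf{S}_{n-1}=\langle C_n\setminus\{a_0\},\wedge,\vee,\to,a_1,1\rangle$ (with the restricted operations, bottom $a_1$ and top $1$) is a semi-Heyting algebra.
   Context: A semi-Heyting algebra is an algebra $\langle L,\vee,\wedge,\to,0,1\rangle$ such that: (SH1) $\langle L,\vee,\wedge,0,1\rangle$ is a bounded lattice with least element $0$ and greatest element $1$; (SH2) $x\wedge(x\to y)=x\wedge y$; (SH3) $x\wedge(y\to z)=x\wedge[(x\wedge y)\to(x\wedge z)]$; (SH4) $x\to x=1$, for all $x,y,z\in L$. *)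

(* Defs.v *)
From mathcomp Require Import all_boot.
Set Implicit Arguments. Unset Strict Implicit. Unset Printing Implicit Defensive.

Definition semiHeyting (L : Type) (join meet imp : L -> L -> L) (bot top : L) : Prop :=
  (forall x y, join x y = join y x) /\
  (forall x y, meet x y = meet y x) /\
  (forall x y z, join x (join y z) = join (join x y) z) /\
  (forall x y z, meet x (meet y z) = meet (meet x y) z) /\
  (forall x y, join x (meet x y) = x) /\
  (forall x y, meet x (join x y) = x) /\
  (forall x, join bot x = x) /\
  (forall x, meet top x = x) /\
  (forall x y, meet x (imp x y) = meet x y) /\
  (forall x y z, meet x (imp y z) = meet x (imp (meet x y) (meet x z))) /\
  (forall x, imp x x = top).

(* The chain C_n = {a_0 < ... < a_{n-1}} is modelled by 'I_n with the natural
   order: meet = min, join = max, a_0 = 0, a_{n-1} = n-1. *)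
Definition chain_meet n (x y : 'I_n) : 'I_n := if x <= y then x else y.
Definition chain_join n (x y : 'I_n) : 'I_n := if x <= y then y else x.

Section Chain.
Variables (n : nat) (hn : 2 <= n).

Lemma chain_lt0 : 0 < n. Proof. exact: leq_trans hn. Qed.
Lemma chain_lt1 : 1 < n. Proof. exact: hn. Qed.
Lemma chain_ltn1 : n.-1 < n. Proof. by case: n hn. Qed.

Definition a0 : 'I_n := Ordinal chain_lt0.
Definition a1 : 'I_n := Ordinal chain_lt1.
Definition atop : 'I_n := Ordinal chain_ltn1.

Definition Cpos := {x : 'I_n | 0 < x}.

Definition pos_a1 : Cpos := exist _ a1 (isT : 0 < 1).
Lemma atop_pos : 0 < atop. Proof. by rewrite /= -ltnS prednK ?chain_lt0. Qed.
Definition pos_top : Cpos := exist _ atop atop_pos.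

(* Restriction of a binary operation on C_n to C_n \ {a_0}; the default value
   pos_a1 is only used if the result leaves the subset, which the theorem
   excludes by its closure clause. *)
Definition restr (f : 'I_n -> 'I_n -> 'I_n) (x y : Cpos) : Cpos :=
  insubd pos_a1 (f (val x) (val y)).
End Chain.

(* Main.v *)
Require Import Defs.
From mathcomp Require Import all_boot.

Lemma neq0P n (hn : 2 <= n) (a : 'I_n) : (a != a0 hn) = (0 < a).
Proof. by rewrite -val_eqE /= lt0n. Qed.

Lemma restrE n (hn : 2 <= n) (f : 'I_n -> 'I_n -> 'I_n) (x y : Cpos n) :
  0 < f (val x) (val y) -> val (restr hn f x y) = f (val x) (val y).
Proof. by move=> h; rewrite /restr insubdK. Qed.

Theorem mainTheorem1 (n : nat) (hn : 2 <= n) (imp : 'I_n -> 'I_n -> 'I_n) :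
  semiHeyting (@chain_join n) (@chain_meet n) imp (a0 hn) (atop hn) ->
  (forall a b : 'I_n, a != a0 hn -> b != a0 hn ->
     [/\ chain_meet a b != a0 hn, chain_join a b != a0 hn & imp a b != a0 hn]) /\
  semiHeyting (restr hn (@chain_join n)) (restr hn (@chain_meet n)) (restr hn imp)
              (pos_a1 hn) (pos_top hn).
Proof.
move=> [jC [mC [jA [mA [jm [mj [j0 [m1 [sh2 [sh3 sh4]]]]]]]]]].
have Hm : forall a b : 'I_n, 0 < a -> 0 < b -> 0 < chain_meet a b.
  by move=> a b ha hb; rewrite /chain_meet; case: ifP.
have Hj : forall a b : 'I_n, 0 < a -> 0 < b -> 0 < chain_join a b.
  by move=> a b ha hb; rewrite /chain_join; case: ifP.
have Hi : forall a b : 'I_n, 0 < a -> 0 < b -> 0 < imp a b.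
  move=> a b ha hb; rewrite lt0n; apply/negP => /eqP h0.
  have := sh2 a b; rewrite (_ : imp a b = a0 hn); last by apply: val_inj.
  move=> E; have := Hm a b ha hb; rewrite -E /chain_meet.
  case: ifP => [|_] //=.
  by rewrite leqn0 => /eqP az; rewrite az in ha.
split.
  by move=> a b; rewrite !neq0P => ha hb; split; [apply: Hm|apply: Hj|apply: Hi].
have EJ : forall x y : Cpos n, val (restr hn (@chain_join n) x y) = chain_join (val x) (val y).
  by move=> x y; rewrite restrE //; exact: Hj (valP x) (valP y).
have EM : forall x y : Cpos n, val (restr hn (@chain_meet n) x y) = chain_meet (val x) (val y).
  by move=> x y; rewrite restrE //; exact: Hm (valP x) (valP y).
have EI : forall x y : Cpos n, val (restr hn imp x y) = imp (val x) (val y).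
  by move=> x y; rewrite restrE //; exact: Hi (valP x) (valP y).
split; first by move=> x y; apply: val_inj; rewrite !EJ.
split; first by move=> x y; apply: val_inj; rewrite !EM.
split; first by move=> x y z; apply: val_inj; rewrite !EJ.
split; first by move=> x y z; apply: val_inj; rewrite !EM.
split; first by move=> x y; apply: val_inj; rewrite !EJ !EM.
split; first by move=> x y; apply: val_inj; rewrite !EM !EJ.
split.
  by move=> x; apply: val_inj; rewrite EJ /chain_join ifT //; exact: (valP x).
split; first by move=> x; apply: val_inj; rewrite EM.
split; first by move=> x y; apply: val_inj; rewrite !EM !EI.
split; first by move=> x y z; apply: val_inj; rewrite !EM !EI !EM.
by move=> x; apply: val_inj; rewrite /= EI sh4.
Qed.
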